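(* For a shift space $X\subseteq\mathscr{A}^\infty$ over a finite alphabet $\mathscr{A}$ the following conditions are equivalent: (i) there exists a descending sequence $X_1\supseteq X_2\supseteq\cdots$ of topologically mixing sofic shifts such that $X=\bigcap_{n=1}^\infty X_n$ and $\bar d^H(X,X_n)\to 0$ as $n\to\infty$; (ii) $\sigma(X)=X$ and $X$ has the $\bar d$-shadowing property; (iii) $X$ is chain mixing and $\bar d$-approachable.
   Context: $\mathscr{A}^\infty=\mathscr{A}^{\mathbb{N}_0}$, $\sigma$ the left shift; a shift space is a nonempty closed $\sigma$-invariant subset. $\mathcal{L}(X)$ is the set of finite words appearing in elements of $X$, $\mathcal{L}_n(X)$ those of length $n$. $X$ is topologically mixing if for all $u,w\in\mathcal L(X)$ there is $N$ such that for all $n\ge N$ there is $v$ with $|v|=n$ and $uvw\in\mathcal L(X)$; transitive if for all $u,w\in\mathcal L(X)$ there is $v$ with $uvw\in\mathcal L(X)$. A sofic shift is the set of label sequences of infinite paths in a finite edge-labelled directed graph. For $x,y\in\mathscr{A}^\infty$, $\bar d(x,y)=\limsup_{n\to\infty}\frac1n|\{0\le j<n:x_j\ne y_j\}|$; for nonempty $A,B\subseteq\mathscr{A}^\infty$, $\bar d^H(A,B)=\max\{\sup_{a\in A}\inf_{b\in B}\bar d(a,b),\sup_{b\in B}\inf_{a\in A}\bar d(a,b)\}$. The $n$-th Markov approximation $X^M_n$ of $X$ is the shift of finite type of all $x\in\mathscr{A}^\infty$ every subword of length $n+1$ of which lies in $\mathcal L_{n+1}(X)$ (so $\mathcal L_j(X^M_n)=\mathcal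 L_j(X)$ for $j\le n+1$). $X$ is $\bar d$-approachable if $\bar d^H(X^M_n,X)\to0$. $X$ is chain mixing (resp. chain transitive) if $X^M_n$ is topologically mixing (resp. transitive) for all but finitely many $n$. $X$ has the $\bar d$-shadowing property if for every $\varepsilon>0$ there is $N\in\mathbb N$ such that for every sequence $(w^{(j)})_{j\ge1}$ of words in $\mathcal L(X)$ with $|w^{(j)}|\ge N$ for all $j$ there is $x'\in X$ with $\bar d(w^{(1)}w^{(2)}w^{(3)}\cdots,x')<\varepsilon$. *)

(* Defs.v *)
From Stdlib Require Import Reals.
From Coquelicot Require Import Coquelicot.
From mathcomp Require Import all_boot.

Set Implicit Arguments.
Unset Strict Implicit.
Unset Printing Implicit Defensive.

Section Shifts.
Variable A : finType.

Definition seqA := nat -> A.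
Definition subshift_set := seqA -> Prop.

Definition shift (x : seqA) : seqA := fun n => x n.+1.

Definition word (x : seqA) (i n : nat) : seq A := mkseq (fun j => x (i + j)%N) n.

(* closed in the product (Tychonoff) topology of the discrete space A:
   x belongs to X as soon as every finite prefix of x is the prefix of
   some element of X *)
Definition closedA (X : subshift_set) : Prop :=
  forall x : seqA,
    (forall n : nat, exists y, X y /\ forall i, (i < n)%N -> y i = x i) -> X x.

Definition shift_space (X : subshift_set) : Prop :=
  (exists x, X x) /\ closedA X /\ (forall x, X x -> X (shift x)).

Definition inL (X : subshift_set) (w : seq A) : Prop :=
  exists x, X x /\ exists i, word x i (size w) = w.

Definition top_mixing (X : subshift_set) : Prop :=
  forall u w, inL X u -> inL X w ->
    exists N, forall n, (N <= n)%N ->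
      exists v, size v = n /\ inL X (u ++ v ++ w).

Definition top_transitive (X : subshift_set) : Prop :=
  forall u w, inL X u -> inL X w -> exists v, inL X (u ++ v ++ w).

(* sofic shift: label sequences of infinite paths in a finite
   edge-labelled directed graph (vertices 'I_nV, edges 'I_nE) *)
Definition sofic_shift (X : subshift_set) : Prop :=
  shift_space X /\
  exists (nV nE : nat) (src tgt : 'I_nE -> 'I_nV) (lab : 'I_nE -> A),
    forall x, X x <->
      exists p : nat -> 'I_nE,
        (forall n, tgt (p n) = src (p n.+1)) /\ (forall n, x n = lab (p n)).

Definition mismatch (x y : seqA) (n : nat) : nat :=
  count (fun j => x j != y j) (iota 0 n).

Definition dbar (x y : seqA) : R :=
  real (LimSup_seq (fun n => Rdiv (INR (mismatch x y n)) (INR n))).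

Definition dbar_sup_inf (X Y : subshift_set) : Rbar :=
  Lub_Rbar (fun r => exists a, X a /\
     r = real (Glb_Rbar (fun s => exists b, Y b /\ s = dbar a b))).

(* Hausdorff dbar distance (all quantities lie in [0,1] for nonempty sets) *)
Definition dbarH (X Y : subshift_set) : R :=
  Rmax (real (dbar_sup_inf X Y)) (real (dbar_sup_inf Y X)).

Definition markov_approx (X : subshift_set) (n : nat) : subshift_set :=
  fun x => forall i, inL X (word x i n.+1).

Definition dbar_approachable (X : subshift_set) : Prop :=
  is_lim_seq (fun n => dbarH (markov_approx X n) X) (Rbar.Finite R0).

Definition chain_mixing (X : subshift_set) : Prop :=
  exists N, forall n, (N <= n)%N -> top_mixing (markov_approx X n).

Definition chain_transitive (X : subshift_set) : Prop :=
  exists N, forall n, (N <= n)%N -> top_transitive (markov_approx X n).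

Definition is_concat (w : nat -> seq A) (x : seqA) : Prop :=
  forall j i, (i < size (w j))%N ->
    x ((\sum_(l < j) size (w l)) + i)%N = nth (x 0%N) (w j) i.

Definition dbar_shadowing (X : subshift_set) : Prop :=
  forall eps : R, Rlt R0 eps ->
    exists N : nat, (0 < N)%N /\
      forall (w : nat -> seq A) (x : seqA),
        (forall j, inL X (w j) /\ (N <= size (w j))%N) ->
        is_concat w x ->
        exists x', X x' /\ Rlt (dbar x x') eps.

End Shifts.

(* Main.v *)
Require Import Defs.
From Stdlib Require Import Reals.
From Coquelicot Require Import Coquelicot.
From mathcomp Require Import all_boot.
From Stdlib Require Import Lra Lia ClassicalEpsilon Classical FunctionalExtensionality.
From mathcomp Require Import zify.

Set Implicit Arguments.
Unset Strict Implicit.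
Unset Printing Implicit Defensive.


Section P1.
Variable A : finType.
Implicit Types (X : seqA A -> Prop) (x y : seqA A) (w : seq A).

Lemma size_word x i n : size (word x i n) = n.
Proof. by rewrite /word size_mkseq. Qed.

Lemma nth_word d x i n j : (j < n)%N -> nth d (word x i n) j = x (i + j)%N.
Proof. by move=> h; rewrite /word nth_mkseq. Qed.

Lemma word_ext x y i i' n :
  (forall j, (j < n)%N -> x (i + j)%N = y (i' + j)%N) -> word x i n = word y i' n.
Proof.
move=> h; apply: (@eq_from_nth _ (x 0%N)); rewrite ?size_word // => j hj.
by rewrite !nth_word // h.
Qed.

Lemma word_cat x i k l : word x i (k + l) = word x i k ++ word x (i + k) l.
Proof.
apply: (@eq_from_nth _ (x 0%N)); rewrite ?size_cat ?size_word // => j hj.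
rewrite nth_cat size_word nth_word //; case: ltnP => hjk.
  by rewrite nth_word.
by rewrite nth_word; [congr x; lia| lia].
Qed.

Lemma word_shift x i n : word (shift x) i n = word x i.+1 n.
Proof. by apply: word_ext => j _; rewrite /shift. Qed.

Lemma inL_word X x i n : X x -> inL X (word x i n).
Proof. by move=> hx; exists x; split => //; exists i; rewrite size_word. Qed.

Lemma shiftn_in X x k : shift_space X -> X x -> X (fun j => x (k + j)%N).
Proof.
case=> _ [_ hs] hx; elim: k => [|k IH]; first by have -> : (fun j => x (0 + j)%N) = x.
have -> : (fun j => x (k.+1 + j)%N) = shift (fun j => x (k + j)%N).
  by apply: functional_extensionality => j; rewrite /shift; congr x; lia.
by apply: hs.
Qed.

Lemma inL_point X w : shift_space X -> inL X w ->
  exists y, X y /\ word y 0 (size w) = w.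
Proof.
move=> sX [x [hx [i hi]]]; exists (fun j => x (i + j)%N); split.
  exact: (@shiftn_in X x i sX hx).
rewrite -{2}hi; apply: word_ext => j _; congr x; lia.
Qed.

Lemma inL_sub X x i n k l : inL X (word x i n) -> (k + l <= n)%N ->
  inL X (word x (i + k) l).
Proof.
move=> [y [hy [j hj]]] hkl; exists y; split => //; exists (j + k)%N.
rewrite size_word; apply: word_ext => t ht.
have := congr1 (fun s => nth (x 0%N) s (k + t)) hj.
rewrite size_word !nth_word; try lia.
by move=> e; rewrite -addnA e addnA.
Qed.

Lemma inL_cat_l X u v : inL X (u ++ v) -> inL X u.
Proof.
move=> [y [hy [j hj]]]; exists y; split => //; exists j.
move: hj; rewrite size_cat word_cat => hj.
by have := congr1 (take (size u)) hj; rewrite !take_size_cat ?size_word.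
Qed.

Lemma inL_cat_r X u v : inL X (u ++ v) -> inL X v.
Proof.
move=> [y [hy [j hj]]]; exists y; split => //; exists (j + size u)%N.
move: hj; rewrite size_cat word_cat => hj.
by have := congr1 (drop (size u)) hj; rewrite !drop_size_cat ?size_word.
Qed.

Lemma X_sub_markov X n x : X x -> markov_approx X n x.
Proof. by move=> hx i; apply: inL_word. Qed.

Lemma markov_desc X n x : markov_approx X n.+1 x -> markov_approx X n x.
Proof.
move=> h i; have := h i.
rewrite (_ : n.+2 = n.+1 + 1)%N ?word_cat; last by lia.
exact: inL_cat_l.
Qed.

Lemma markov_le X m n x : (m <= n)%N -> markov_approx X n x -> markov_approx X m x.
Proof.
move=> hmn; elim: n hmn => [|n IH] hmn h.
  by have -> : m = 0%N by lia.
case: (ltngtP m n.+1) hmn => // [hlt|->] _ //.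
by apply: IH; [lia| apply: markov_desc].
Qed.

Lemma markov_shift X n x : markov_approx X n x -> markov_approx X n (shift x).
Proof. by move=> h i; rewrite word_shift. Qed.

Lemma markov_closed X n : closedA (markov_approx X n).
Proof.
move=> x h i; have [y [hy hxy]] := h (i + n.+1)%N.
rewrite (_ : word x i n.+1 = word y i n.+1); first exact: hy.
by apply: word_ext => j hj; rewrite hxy //; lia.
Qed.

Lemma markov_shift_space X n : shift_space X -> shift_space (markov_approx X n).
Proof.
move=> [[x hx] _]; split; first by exists x; apply: X_sub_markov.
split; [exact: markov_closed|exact: markov_shift].
Qed.

Lemma X_inter_markov X x : shift_space X ->
  X x <-> forall n, markov_approx X n x.
Proof.
move=> sX; split; first by move=> hx n; apply: X_sub_markov.
move=> h; have [_ [cX _]] := sX; apply: cX => n.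
have := h n 0%N => /(inL_point sX) [y [hy hw]]; exists y; split => // i hi.
have := congr1 (fun s => nth (x 0%N) s i) hw; rewrite size_word !nth_word //; lia.
Qed.

Lemma markov_shiftn X n x k : markov_approx X n x ->
  markov_approx X n (fun j => x (k + j)%N).
Proof.
move=> h i; rewrite (_ : word _ i _ = word x (k + i) n.+1) //.
by apply: word_ext => j _; congr x; lia.
Qed.

(* gluing two chains with an overlap of length n+1 *)
Definition glue (y1 y2 : seqA A) (p n : nat) : seqA A :=
  fun k => if (k <= p + n)%N then y1 k else y2 (k - p)%N.

Lemma glue_markov X n y1 y2 p :
  markov_approx X n y1 -> markov_approx X n y2 ->
  (forall t, (t <= n)%N -> y1 (p + t)%N = y2 t) ->
  markov_approx X n (glue y1 y2 p n).
Proof.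
move=> h1 h2 hov i; case: (leqP i p) => hip.
  rewrite (_ : word _ i _ = word y1 i n.+1); first exact: h1.
  by apply: word_ext => j hj; rewrite /glue ifT //; lia.
rewrite (_ : word _ i _ = word y2 (i - p) n.+1); first exact: h2.
apply: word_ext => j hj; rewrite /glue; case: ifP => hh.
  rewrite (_ : (i + j)%N = (p + (i + j - p))%N); last by lia.
  by rewrite hov; [congr y2; lia| lia].
by congr y2; lia.
Qed.

End P1.


Section P2.
Local Open Scope R_scope.
Variable A : finType.
Implicit Types (X Y : seqA A -> Prop) (x y z : seqA A).

Lemma mismatch_le x y n : (mismatch x y n <= n)%N.
Proof. by rewrite /mismatch; have := count_size (fun j => x j != y j) (iota 0 n); rewrite size_iota. Qed.

Lemma mismatch_add x y a b :
  mismatch x y (a + b) = (mismatch x y a + count (fun j => x j != y j) (iota a b))%N.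
Proof. by rewrite /mismatch iotaD count_cat. Qed.

Lemma count_tri x y z s :
  (count (fun j => x j != z j) s <= count (fun j => x j != y j) s + count (fun j => y j != z j) s)%N.
Proof.
elim: s => //= j s IH.
have H : forall a b c : A, ((a != c) <= (a != b) + (b != c))%N.
  move=> a b c; case: (a =P c) => [_|hac] //; case: (a =P b) => [hab|] //.
  case: (b =P c) => [hbc|] //; by exfalso; apply hac; rewrite hab hbc.
have := H (x j) (y j) (z j).
lia.
Qed.

Lemma mismatch_tri x y z n :
  (mismatch x z n <= mismatch x y n + mismatch y z n)%N.
Proof. exact: count_tri. Qed.

Lemma mismatch_mono x y m n : (m <= n)%N -> (mismatch x y m <= mismatch x y n)%N.
Proof. move=> h; rewrite (_ : n = m + (n - m))%N ?mismatch_add; lia. Qed.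

Lemma mismatch_sym x y n : mismatch x y n = mismatch y x n.
Proof. by apply: eq_count => j; rewrite eq_sym. Qed.

Lemma mismatch_refl x n : mismatch x x n = 0%N.
Proof. by rewrite /mismatch (eq_count (a2 := pred0)) ?count_pred0 // => j; rewrite eqxx. Qed.

Definition ratio x y (n : nat) : R := Rdiv (INR (mismatch x y n)) (INR n).

Lemma ratio_bounds x y n : (0 <= ratio x y n <= 1).
Proof.
rewrite /ratio; case: n => [|n].
  by rewrite /mismatch /= /Rdiv Rmult_0_l; lra.
have h := mismatch_le x y n.+1.
have hn : (0 < INR n.+1) by apply: lt_0_INR; lia.
split; first by apply: Rdiv_le_0_compat => //; apply: pos_INR.
have hle : (INR (mismatch x y n.+1) <= INR n.+1) by apply: le_INR; apply/leP.
have -> : 1 = (INR n.+1 / INR n.+1) by field; lra.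
apply: Rmult_le_compat_r => //; apply: Rlt_le; exact: Rinv_0_lt_compat.
Qed.

Lemma LimSup_fin x y : LimSup_seq (ratio x y) = Rbar.Finite (dbar x y).
Proof.
have h0 : Rbar_le (Rbar.Finite 0) (LimSup_seq (ratio x y)).
  rewrite -(LimSup_seq_const 0); apply: LimSup_le; exists 0%N => n _.
  by case: (ratio_bounds x y n).
have h1 : Rbar_le (LimSup_seq (ratio x y)) (Rbar.Finite 1).
  rewrite -(LimSup_seq_const 1); apply: LimSup_le; exists 0%N => n _.
  by case: (ratio_bounds x y n).
rewrite /dbar -/(ratio x y).
by case: (LimSup_seq (ratio x y)) h0 h1.
Qed.

Lemma dbar_bounds x y : (0 <= dbar x y <= 1).
Proof.
have h0 : Rbar_le (Rbar.Finite 0) (LimSup_seq (ratio x y)).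
  rewrite -(LimSup_seq_const 0); apply: LimSup_le; exists 0%N => n _.
  by case: (ratio_bounds x y n).
have h1 : Rbar_le (LimSup_seq (ratio x y)) (Rbar.Finite 1).
  rewrite -(LimSup_seq_const 1); apply: LimSup_le; exists 0%N => n _.
  by case: (ratio_bounds x y n).
by rewrite LimSup_fin /= in h0 h1.
Qed.

Lemma isLimSup x y : is_LimSup_seq (ratio x y) (Rbar.Finite (dbar x y)).
Proof.
rewrite -LimSup_fin /LimSup_seq; by case: ex_LimSup_seq.
Qed.

Lemma dbar_ev x y eps : (0 < eps) ->
  exists N, forall n, (N <= n)%N -> (ratio x y n < dbar x y + eps).
Proof.
move=> he; have := isLimSup x y (mkposreal _ he) => /= [[_ [N hN]]].
by exists N => n hn; apply: hN; apply/leP.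
Qed.

Lemma dbar_le_of x y c :
  (forall eps, (0 < eps) -> exists N, forall n, (N <= n)%N -> (ratio x y n <= c + eps)) ->
  (dbar x y <= c).
Proof.
move=> h; apply: Rnot_lt_le => hlt.
have he : (0 < (dbar x y - c) / 2) by lra.
have [N hN] := h _ he.
have := isLimSup x y (mkposreal _ he) => /= [[hinf _]].
have [n [hn hu]] := hinf N.
have := hN n (introT leP hn); lra.
Qed.

Lemma dbar_tri x y z : (dbar x z <= dbar x y + dbar y z).
Proof.
apply: dbar_le_of => eps he.
have he2 : (0 < eps / 2) by lra.
have [N1 h1] := dbar_ev x y he2; have [N2 h2] := dbar_ev y z he2.
exists (maxn N1 N2) => n hn.
have := h1 n ltac:(lia); have := h2 n ltac:(lia).
rewrite /ratio; case: n hn => [|n] hn.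
  by rewrite /mismatch /= /Rdiv !Rmult_0_l; lra.
have hn' : (0 < INR n.+1) by apply: lt_0_INR; lia.
have ht := mismatch_tri x y z n.+1.
have : (INR (mismatch x z n.+1) <= INR (mismatch x y n.+1) + INR (mismatch y z n.+1)).
  by rewrite -plus_INR; apply: le_INR; apply/leP.
move=> hle h2' h1'.
have : (INR (mismatch x z n.+1) / INR n.+1 <=
        INR (mismatch x y n.+1) / INR n.+1 + INR (mismatch y z n.+1) / INR n.+1).
  rewrite -Rdiv_plus_distr; apply: Rmult_le_compat_r => //.
  by apply: Rlt_le; apply: Rinv_0_lt_compat.
lra.
Qed.

Lemma dbar_refl x : dbar x x = 0.
Proof.
have := dbar_bounds x x; suff : (dbar x x <= 0) by lra.
apply: dbar_le_of => eps he; exists 0%N => n _.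
by rewrite /ratio mismatch_refl /= /Rdiv Rmult_0_l; lra.
Qed.

Lemma dbar_sym x y : dbar x y = dbar y x.
Proof.
by rewrite /dbar; congr (real (LimSup_seq _)); apply: functional_extensionality => n; rewrite mismatch_sym.
Qed.

Lemma dbar_le_lin x y c K : (0 <= c) ->
  (forall n, (0 < n)%N -> (INR (mismatch x y n) <= c * INR n + INR K)) ->
  (dbar x y <= c).
Proof.
move=> hc h; apply: dbar_le_of => eps he.
have [N hN] := INR_archimed eps (INR K) he.
exists N.+1 => n hn.
have hn0 : (0 < INR n) by apply: lt_0_INR; lia.
have hNn : (INR N <= INR n) by apply: le_INR; lia.
have := h n ltac:(lia); rewrite /ratio => hm.
apply: (Rmult_le_reg_r (INR n)) => //.
rewrite /Rdiv Rmult_assoc Rinv_l ?Rmult_1_r; last by lra.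
have : (INR K <= eps * INR n) by nra.
nra.
Qed.

Definition gl (a : seqA A) Y : Rbar := Glb_Rbar (fun s => exists b, Y b /\ s = dbar a b).

Lemma gl_fin a Y : (exists b, Y b) -> gl a Y = Rbar.Finite (real (gl a Y)) /\ (0 <= real (gl a Y) <= 1).
Proof.
move=> [b hb]; have [hlb hg] := Glb_Rbar_correct (fun s => exists b, Y b /\ s = dbar a b).
have hb1 := hlb (dbar a b) (ex_intro _ b (conj hb erefl)).
have h1 : Rbar_le (gl a Y) (Rbar.Finite 1).
  apply: (Rbar_le_trans _ _ _ hb1); by have := dbar_bounds a b; rewrite /=; lra.
have h0 : Rbar_le (Rbar.Finite 0) (gl a Y).
  apply: hg => s [b' [_ ->]]; by have := dbar_bounds a b'; rewrite /=; lra.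
by case: (gl a Y) h0 h1.
Qed.

Lemma gl_le a Y b : Y b -> (real (gl a Y) <= dbar a b).
Proof.
move=> hb; have [hf _] := gl_fin a (ex_intro _ b hb).
have [hlb _] := Glb_Rbar_correct (fun s => exists b, Y b /\ s = dbar a b).
have := hlb (dbar a b) (ex_intro _ b (conj hb erefl)).
by rewrite -/(gl a Y) hf.
Qed.

Lemma gl_lt a Y c : (exists b, Y b) -> (real (gl a Y) < c) ->
  exists b, Y b /\ (dbar a b < c).
Proof.
move=> hne hlt; apply: NNPP => hno.
have [hf _] := gl_fin a hne.
have [_ hg] := Glb_Rbar_correct (fun s => exists b, Y b /\ s = dbar a b).
have : Rbar_le (Rbar.Finite c) (gl a Y).
  apply: hg => s [b [hb ->]] /=; apply: Rnot_lt_le => hh; apply: hno; by exists b.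
rewrite hf /=; lra.
Qed.

Lemma dsi_eq X Y : dbar_sup_inf X Y = Lub_Rbar (fun r => exists a, X a /\ r = real (gl a Y)).
Proof. by []. Qed.

Lemma dsi_fin X Y : (exists a, X a) -> (exists b, Y b) ->
  dbar_sup_inf X Y = Rbar.Finite (real (dbar_sup_inf X Y)) /\ (0 <= real (dbar_sup_inf X Y) <= 1).
Proof.
move=> [a ha] hY; rewrite dsi_eq.
have [hub hl] := Lub_Rbar_correct (fun r => exists a, X a /\ r = real (gl a Y)).
have ha1 := hub (real (gl a Y)) (ex_intro _ a (conj ha erefl)).
have h0 : Rbar_le (Rbar.Finite 0) (Lub_Rbar (fun r => exists a, X a /\ r = real (gl a Y))).
  apply: (Rbar_le_trans _ _ _ _ ha1).
  by have := (gl_fin a hY).2; rewrite /=; lra.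
have h1 : Rbar_le (Lub_Rbar (fun r => exists a, X a /\ r = real (gl a Y))) (Rbar.Finite 1).
  apply: hl => r [a' [_ ->]] /=; by have := (gl_fin a' hY).2; lra.
by case: (Lub_Rbar _) h0 h1.
Qed.

Lemma dsi_ge X Y a : X a -> (exists b, Y b) -> (real (gl a Y) <= real (dbar_sup_inf X Y)).
Proof.
move=> ha hY; have [hf _] := dsi_fin (ex_intro _ a ha) hY.
have [hub _] := Lub_Rbar_correct (fun r => exists a, X a /\ r = real (gl a Y)).
have := hub (real (gl a Y)) (ex_intro _ a (conj ha erefl)).
by rewrite -dsi_eq hf.
Qed.

Lemma dsi_le X Y c : (exists a, X a) -> (exists b, Y b) ->
  (forall a, X a -> (real (gl a Y) <= c)) -> (real (dbar_sup_inf X Y) <= c).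
Proof.
move=> hX hY h; have [hf _] := dsi_fin hX hY.
have [_ hl] := Lub_Rbar_correct (fun r => exists a, X a /\ r = real (gl a Y)).
have : Rbar_le (Lub_Rbar (fun r => exists a, X a /\ r = real (gl a Y))) (Rbar.Finite c).
  by apply: hl => r [a [ha ->]]; apply: h.
by rewrite -dsi_eq hf.
Qed.

Lemma dbarH_sym X Y : dbarH X Y = dbarH Y X.
Proof. by rewrite /dbarH Rmax_comm. Qed.

Lemma dbarH_ge0 X Y : (exists a, X a) -> (exists b, Y b) -> (0 <= dbarH X Y).
Proof.
move=> hX hY; have := (dsi_fin hX hY).2; rewrite /dbarH => h.
apply: Rle_trans (Rmax_l _ _); lra.
Qed.

Lemma dbarH_close X Y y c : (exists a, X a) -> Y y -> (dbarH X Y < c) ->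
  exists x, X x /\ (dbar y x < c).
Proof.
move=> hX hy hH; apply: gl_lt => //.
apply: Rle_lt_trans hH; apply: Rle_trans (Rmax_r _ _).
exact: dsi_ge.
Qed.

Lemma dbarH_le X Y c : (exists a, X a) -> (exists b, Y b) ->
  (forall a, X a -> exists b, Y b /\ (dbar a b <= c)) ->
  (forall b, Y b -> exists a, X a /\ (dbar b a <= c)) ->
  (dbarH X Y <= c).
Proof.
move=> hX hY h1 h2; rewrite /dbarH; apply: Rmax_lub; apply: dsi_le => // a ha.
  have [b [hb hle]] := h1 a ha; apply: Rle_trans hle; exact: gl_le.
have [b [hb hle]] := h2 a ha; apply: Rle_trans hle; exact: gl_le.
Qed.

End P2.


Section P3.
Variable A : finType.
Implicit Types (X Y : seqA A -> Prop) (x y z : seqA A).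

Section Graph.
Variables (X : seqA A -> Prop) (k : nat).

Local Notation ET := ((k.+1).-tuple A).
Local Notation VT := (option (option (k.-tuple A))).

Definition goodE (t : ET) : bool :=
  if excluded_middle_informative (inL X t) then true else false.

Lemma goodEP (t : ET) : goodE t -> inL X t.
Proof. by rewrite /goodE; case: excluded_middle_informative. Qed.

Lemma goodE_in (t : ET) : inL X t -> goodE t.
Proof. by rewrite /goodE; case: excluded_middle_informative. Qed.

Lemma cons_thead (m : nat) (t : m.+1.-tuple A) : thead t :: behead t = t :> seq A.
Proof. by case: t => [[|a s] /= hs] //; rewrite /thead (tnth_nth a). Qed.

Definition fstk (t : ET) : k.-tuple A := belast_tuple (thead t) (behead_tuple t).
Definition sndk (t : ET) : k.-tuple A := behead_tuple t.

Definition srcV (t : ET) : VT := if goodE t then Some (Some (fstk t)) else Some None.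
Definition tgtV (t : ET) : VT := if goodE t then Some (Some (sndk t)) else None.

Definition gsrc (e : 'I_#|{: ET}|) : 'I_#|{: VT}| := enum_rank (srcV (enum_val e)).
Definition gtgt (e : 'I_#|{: ET}|) : 'I_#|{: VT}| := enum_rank (tgtV (enum_val e)).
Definition glab (e : 'I_#|{: ET}|) : A := thead (enum_val e).

Definition mkE x n : ET := @Tuple _ _ (word x n k.+1) (introT eqP (size_word x n k.+1)).

Lemma word_S x n m : word x n m.+1 = x n :: word x n.+1 m.
Proof.
rewrite (_ : m.+1 = 1 + m)%N // word_cat /word /=; congr (_ :: _); first by rewrite addn0.
by apply: word_ext => j _; congr x; lia.
Qed.

Lemma word_rcons x n m : word x n m.+1 = rcons (word x n m) (x (n + m)%N).
Proof. by rewrite -addn1 word_cat cats1 /word /= addn0. Qed.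

Lemma val_mkE x n : tval (mkE x n) = word x n k.+1.
Proof. by []. Qed.

Lemma thead_mkE x n : thead (mkE x n) = x n.
Proof. by rewrite /thead (tnth_nth (x 0%N)) val_mkE nth_word // addn0. Qed.

Lemma snd_fst x n : sndk (mkE x n) = fstk (mkE x n.+1).
Proof.
apply: val_inj.
change (behead (tval (mkE x n)) = belast (thead (mkE x n.+1)) (behead (tval (mkE x n.+1)))).
rewrite !val_mkE thead_mkE !word_S /=.
have := lastI (x n.+1) (word x n.+2 k).
rewrite -word_S word_rcons => e; by case: (rcons_inj e).
Qed.

Lemma markov_sofic : shift_space X -> sofic_shift (markov_approx X k).
Proof.
move=> sX; split; first exact: markov_shift_space.
exists #|{: VT}|, #|{: ET}|, gsrc, gtgt, glab => x; split.
  move=> hx; exists (fun n => enum_rank (mkE x n)); split => n.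
    rewrite /gsrc /gtgt !enum_rankK /srcV /tgtV !goodE_in ?snd_fst //; exact: hx.
  by rewrite /glab enum_rankK thead_mkE.
move=> [p [hc hl]].
have hg : forall n, goodE (enum_val (p n)).
  move=> n; have := hc n; rewrite /gsrc /gtgt => /enum_rank_inj; rewrite /tgtV /srcV.
  by case: (goodE (enum_val (p n))) => //; case: (goodE (enum_val (p n.+1))).
have hst : forall n, sndk (enum_val (p n)) = fstk (enum_val (p n.+1)).
  move=> n; have := hc n; rewrite /gsrc /gtgt => /enum_rank_inj.
  rewrite /tgtV /srcV (hg n) (hg n.+1) => e; injection e as e'; apply: val_inj; exact: e'.
pose t n := enum_val (p n).
have hnth : forall i n, (i <= k)%N -> nth (x 0%N) (t n) i = x (n + i)%N.
  elim => [|i IH] n hi.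
    by rewrite addn0 (hl n) /glab -/(t n) /thead (tnth_nth (x 0%N)).
  have e1 : nth (x 0%N) (t n) i.+1 = nth (x 0%N) (sndk (t n)) i.
    by rewrite /sndk /= nth_behead.
  rewrite e1 hst /fstk /=.
  have := lastI (thead (t n.+1)) (behead (t n.+1)).
  rewrite cons_thead => e2.
  have e3 : nth (x 0%N) (t n.+1) i = nth (x 0%N) (belast (thead (t n.+1)) (behead (t n.+1))) i.
    rewrite [in LHS]e2 nth_rcons size_belast size_behead size_tuple /=.
    by case: ltnP => //; lia.
  rewrite -e3 IH; [congr x; lia| lia].
move=> n; have := goodEP (hg n).
rewrite (_ : tval (t n) = word x n k.+1) //.
apply: (@eq_from_nth _ (x 0%N)); rewrite ?size_tuple ?size_word // => i hi.
by rewrite nth_word // hnth //; lia.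
Qed.

End Graph.

Lemma iii_to_i X : shift_space X ->
  chain_mixing X /\ dbar_approachable X ->
  exists Xs : nat -> (seqA A -> Prop),
      (forall n, sofic_shift (Xs n) /\ top_mixing (Xs n)) /\
      (forall n x, Xs n.+1 x -> Xs n x) /\
      (forall x, X x <-> forall n, Xs n x) /\
      is_lim_seq (fun n => dbarH X (Xs n)) (Rbar.Finite R0).
Proof.
move=> sX [[N hmix] happ].
exists (fun n => markov_approx X (n + N)); split; [|split; [|split]].
- move=> n; split; first exact: markov_sofic.
  apply: hmix; lia.
- by move=> n x; rewrite addSn; apply: markov_desc.
- move=> x; rewrite X_inter_markov //; split => h n; first exact: h.
  by apply: (@markov_le _ _ _ (n + N)%N); [lia| exact: h].
- have := proj1 (is_lim_seq_incr_n _ N _) happ.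
  apply: is_lim_seq_ext => n; by rewrite dbarH_sym.
Qed.

End P3.


Lemma fin_bound (T : finType) (Q : T -> nat -> Prop) :
  (forall t N N', (N <= N')%N -> Q t N -> Q t N') ->
  (forall t, exists N, Q t N) -> exists K, forall t, Q t K.
Proof.
move=> hmono h.
pose f t := proj1_sig (constructive_indefinite_description _ (h t)).
have hf : forall t, Q t (f t).
  by move=> t; rewrite /f; case: constructive_indefinite_description.
exists (\max_t f t) => t; apply: hmono (hf t); exact: leq_bigmax.
Qed.

Lemma pigeon (T : finType) (P : nat -> T -> Prop) :
  (forall k, exists a, P k a) -> (forall k k' a, (k' <= k)%N -> P k a -> P k' a) ->
  exists a, forall k, P k a.
Proof.
move=> hex hmono; apply: NNPP => hno.
have h : forall a, exists k, ~ P k a.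
  move=> a; apply: NNPP => hk; apply: hno; exists a => k; apply: NNPP => hk'.
  by apply: hk; exists k.
have [K hK] := @fin_bound T (fun a N => ~ P N a) (fun a N N' hNN' hN hP => hN (hmono _ _ _ hNN' hP)) h.
have [a ha] := hex K; exact: hK a ha.
Qed.

Section P4a.
Variable A : finType.
Implicit Types (X Y : seqA A -> Prop) (x y z : seqA A) (u v w : seq A).

Definition consA (c : A) x : seqA A := fun k => if k is k'.+1 then x k' else c.

Lemma inL_nil Y : (exists y, Y y) -> inL Y [::].
Proof. by move=> [y hy]; exists y; split => //; exists 0%N. Qed.

Lemma left_ext Y w : shift_space Y -> top_mixing Y -> inL Y w -> exists c, inL Y (c :: w).
Proof.
move=> sY hm hw; have [M hM] := hm [::] w (inL_nil sY.1) hw.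
have [v [hv hvw]] := hM (M.+1) (leqnSn M).
case: v hv hvw => [|c0 s] //= _ hvw.
exists (last c0 s); move: hvw; rewrite -cat_cons lastI -cats1 -catA cat1s.
exact: inL_cat_r.
Qed.

Lemma word_cons c x k : word (consA c x) 0 k.+1 = c :: word x 0 k.
Proof.
rewrite -add1n word_cat.
have -> : word (consA c x) 0 1 = [:: c] by [].
by rewrite cat1s; congr (_ :: _); apply: word_ext.
Qed.

Lemma preimage_Y Y x : shift_space Y -> top_mixing Y -> Y x -> exists c, Y (consA c x).
Proof.
move=> sY hm hx.
have hmono : forall k k' a, (k' <= k)%N -> inL Y (a :: word x 0 k) -> inL Y (a :: word x 0 k').
  move=> k k' a hkk' h.
  move: h; rewrite (_ : k = k' + (k - k'))%N; last by lia.
  by rewrite word_cat -cat_cons => /inL_cat_l.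
have [c hc] := @pigeon A (fun k c => inL Y (c :: word x 0 k))
   (fun k => left_ext sY hm (inL_word 0%N k hx)) hmono.
exists c; have [_ [cY _]] := sY; apply: cY => k.
case: k => [|k]; first by have [y hy] := sY.1; exists y.
have [y [hy hw]] := inL_point sY (hc k).
exists y; split => // i hi.
rewrite /= size_word -word_cons in hw.
by have := congr1 (fun s => nth c s i) hw; rewrite !nth_word // !add0n.
Qed.

Lemma shift_consA c x : shift (consA c x) = x.
Proof. by apply: functional_extensionality. Qed.

Lemma i_surj X (Xs : nat -> seqA A -> Prop) :
  shift_space X ->
  (forall n, sofic_shift (Xs n) /\ top_mixing (Xs n)) ->
  (forall n x, Xs n.+1 x -> Xs n x) ->
  (forall x, X x <-> forall n, Xs n x) ->
  forall x, X x <-> exists y, X y /\ shift y = x.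
Proof.
move=> sX hs hdesc hX x; split; last first.
  by move=> [y [hy <-]]; have [_ [_ hsh]] := sX; apply: hsh.
move=> hx.
have hdesc' : forall n n' z, (n' <= n)%N -> Xs n z -> Xs n' z.
  move=> n n' z; elim: n => [|n IH] hle hz; first by have -> : n' = 0%N by lia.
  case: (ltngtP n' n.+1) hle => // [hlt|->] _ //.
  by apply: IH; [lia| apply: hdesc].
have h1 : forall n, exists c, Xs n (consA c x).
  move=> n; have [hsof hmix] := hs n.
  apply: preimage_Y => //; first exact: hsof.1.
  by move: hx; rewrite hX.
have h2 : forall k k' a, (k' <= k)%N -> Xs k (consA a x) -> Xs k' (consA a x).
  by move=> k k' a hle; apply: hdesc'.
have [c hc] := @pigeon A (fun n c => Xs n (consA c x)) h1 h2.
exists (consA c x); split; last exact: shift_consA.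
by rewrite hX.
Qed.

End P4a.


Definition asb (P : Prop) : bool := if excluded_middle_informative P then true else false.
Lemma asbP (P : Prop) : asb P <-> P.
Proof. by rewrite /asb; case: excluded_middle_informative. Qed.

Section P4b.
Variable A : finType.
Implicit Types (x y z : seqA A) (u v w : seq A).

Lemma word_nth x i n s d : word x i n = s -> forall j, (j < n)%N -> x (i + j)%N = nth d s j.
Proof. by move=> <- j hj; rewrite nth_word. Qed.

Variables (Y : seqA A -> Prop) (nV nE : nat) (src tgt : 'I_nE -> 'I_nV) (lab : 'I_nE -> A).
Hypothesis hY : forall x, Y x <-> exists p : nat -> 'I_nE,
        (forall n, tgt (p n) = src (p n.+1)) /\ (forall n, x n = lab (p n)).

Definition isPath (p : nat -> 'I_nE) := forall n, tgt (p n) = src (p n.+1).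
Definition labs (p : nat -> 'I_nE) : seqA A := fun n => lab (p n).

Lemma labs_Y p : isPath p -> Y (labs p).
Proof. by move=> hp; apply/hY; exists p. Qed.

Lemma inL_path u : inL Y u -> exists p i, isPath p /\ word (labs p) i (size u) = u.
Proof.
move=> [y [hy [i hi]]]; have [p [hp hl]] := (hY y).1 hy.
exists p, i; split => //; rewrite -[in RHS]hi; apply: word_ext => j _; by rewrite hl.
Qed.

Definition Se u : {ffun 'I_nV -> bool} := [ffun a => asb (exists p i, isPath p /\
   word (labs p) i (size u) = u /\ src (p (i + size u)%N) = a)].
Definition Ss w : {ffun 'I_nV -> bool} := [ffun a => asb (exists p, isPath p /\
   word (labs p) 0 (size w) = w /\ src (p 0%N) = a)].

Definition splice (p1 p2 : nat -> 'I_nE) (s t : nat) : nat -> 'I_nE :=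
  fun j => if (j < s)%N then p1 j else p2 (j - s + t)%N.

Lemma splice_path p1 p2 s t : isPath p1 -> isPath p2 -> src (p1 s) = src (p2 t) ->
  isPath (splice p1 p2 s t).
Proof.
move=> h1 h2 e n; rewrite /splice.
case: (ltnP n.+1 s) => hn.
  by rewrite ifT ?h1 //; lia.
case: (ltnP n s) => hn'.
  have -> : s = n.+1 by lia.
  by rewrite h1 subnn add0n -e (_ : s = n.+1) //; lia.
by rewrite h2; congr (src (p2 _)); lia.
Qed.

Lemma transfer u0 v w0 u w : inL Y (u0 ++ v ++ w0) -> Se u = Se u0 -> Ss w = Ss w0 ->
  inL Y (u ++ v ++ w).
Proof.
move=> hL hSe hSs.
have [q [i [hq hw]]] := inL_path hL.
rewrite !size_cat !word_cat in hw.
move/eqP: hw; rewrite eqseq_cat ?size_word // => /andP [/eqP hw1 /eqP hw23].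
move/eqP: hw23; rewrite eqseq_cat ?size_word // => /andP [/eqP hw2 /eqP hw3].
set a := src (q (i + size u0)%N).
have : Se u0 a by rewrite /Se ffunE; apply/asbP; exists q, i.
rewrite -hSe /Se ffunE => /asbP [p1 [i1 [hp1 [hu ha]]]].
set s2 := (i + size u0 + size v)%N.
set b := src (q s2).
have : Ss w0 b.
  rewrite /Ss ffunE; apply/asbP; exists (fun j => q (s2 + j)%N); split.
    by move=> n; rewrite hq addnS.
  by split; [rewrite -[in RHS]hw3; apply: word_ext => j _| rewrite addn0].
rewrite -hSs /Ss ffunE => /asbP [p2 [hp2 [hw' hb]]].
set inner := splice q p2 s2 0.
have hinner : isPath inner by apply: splice_path => //; rewrite hb.
set r := splice p1 inner (i1 + size u) (i + size u0).
have hr : isPath r.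
  apply: splice_path => //; rewrite ha /inner /splice.
  case: ifP => // hlt.
  have hs2 : s2 = (i + size u0 + size v)%N by [].
  have e0 : (i + size u0 - s2 + 0)%N = 0%N by move/negbT: hlt; rewrite -leqNgt; lia.
  rewrite e0 hb /b (_ : s2 = (i + size u0)%N) //; move/negbT: hlt; rewrite -leqNgt; lia.
exists (labs r); split; first exact: labs_Y.
exists i1; rewrite !size_cat !word_cat; congr (_ ++ _ ++ _).
- rewrite -[in RHS]hu; apply: word_ext => j hj.
  by rewrite /labs /r /splice /= ifT //; lia.
- rewrite -[in RHS]hw2; apply: word_ext => j hj.
  rewrite /labs /r /splice /= ifF; last by apply/negbTE; rewrite -leqNgt; lia.
  rewrite /inner /splice /= ifT; last by lia.
  congr (lab (q _)); lia.
- rewrite -[in RHS]hw'; apply: word_ext => j hj.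
  rewrite /labs /r /splice /= ifF; last by apply/negbTE; rewrite -leqNgt; lia.
  rewrite /inner /splice /= ifF; last by apply/negbTE; rewrite -leqNgt; lia.
  congr (lab (p2 _)); lia.
Qed.

Lemma sofic_spec : top_mixing Y -> exists K, forall u w, inL Y u -> inL Y w ->
  exists v, size v = K /\ inL Y (u ++ v ++ w).
Proof.
move=> hm.
pose Q (tau : {ffun 'I_nV -> bool} * {ffun 'I_nV -> bool}) N := forall m, (N <= m)%N ->
  forall u w, inL Y u -> inL Y w -> (Se u, Ss w) = tau ->
  exists v, size v = m /\ inL Y (u ++ v ++ w).
have hmono : forall t N N', (N <= N')%N -> Q t N -> Q t N'.
  by move=> t N N' hle h m hm'; apply: h; lia.
have hex : forall t, exists N, Q t N.
  move=> t.
  case: (classic (exists u0 w0, inL Y u0 /\ inL Y w0 /\ (Se u0, Ss w0) = t)).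
    move=> [u0 [w0 [hu0 [hw0 ht]]]].
    have [N hN] := hm u0 w0 hu0 hw0.
    exists N => m hNm u w hu hw htw.
    have [v [hv hL]] := hN m hNm.
    exists v; split => //; apply: (transfer hL).
      by rewrite -ht in htw; case: htw.
    by rewrite -ht in htw; case: htw.
  move=> hno; exists 0%N => m _ u w hu hw htw; exfalso; apply: hno.
  by exists u, w.
have [K hK] := fin_bound hmono hex.
exists K => u w hu hw.
exact: (hK (Se u, Ss w) K (leqnn K) u w hu hw erefl).
Qed.

End P4b.


Section P4c.
Variable A : finType.
Implicit Types (x y z : seqA A) (u v : seq A).

Lemma inL_mono (X Y : seqA A -> Prop) s : (forall x, X x -> Y x) -> inL X s -> inL Y s.
Proof. by move=> h [x [hx hi]]; exists x; split => //; apply: h. Qed.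

Variables (X Y : seqA A -> Prop) (K N : nat) (w : nat -> seq A) (x : seqA A).
Hypotheses (hXY : forall x, X x -> Y x) (sY : shift_space Y)
  (hspec : forall u v, inL Y u -> inL Y v -> exists g, size g = K /\ inL Y (u ++ g ++ v))
  (hKN : (K < N)%N) (hw : forall j, inL X (w j) /\ (N <= size (w j))%N)
  (hcat : is_concat w x).

Let d := x 0%N.
Definition ub j := take (size (w j) - K) (w j).

Lemma ub_in j : inL Y (ub j).
Proof.
have := inL_mono hXY (hw j).1; rewrite -(cat_take_drop (size (w j) - K) (w j)).
exact: inL_cat_l.
Qed.

Lemma size_ub j : size (ub j) = (size (w j) - K)%N.
Proof. rewrite size_take; have := (hw j).2; case: ltnP => //; lia. Qed.

Definition gapf (Z u : seq A) : seq A :=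
  match excluded_middle_informative (exists g, size g = K /\ inL Y (Z ++ g ++ u)) with
  | left h => proj1_sig (constructive_indefinite_description _ h)
  | right _ => nseq K d
  end.

Lemma gapf_spec Z u : inL Y Z -> inL Y u -> size (gapf Z u) = K /\ inL Y (Z ++ gapf Z u ++ u).
Proof.
move=> hZ hu; rewrite /gapf; case: excluded_middle_informative => [h|h].
  by case: constructive_indefinite_description.
by exfalso; apply: h; apply: hspec.
Qed.

Fixpoint Zs j : seq A :=
  match j with 0 => ub 0 | j'.+1 => Zs j' ++ gapf (Zs j') (ub j'.+1) ++ ub j'.+1 end.

Definition Ssum j := (\sum_(l < j) size (w l))%N.

Lemma SsumS j : Ssum j.+1 = (Ssum j + size (w j))%N.
Proof. by rewrite /Ssum big_ord_recr. Qed.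

Lemma Ssum_ge j : (j * N <= Ssum j)%N.
Proof. elim: j => [|j IH] //; rewrite SsumS mulSnr; have := (hw j).2; lia. Qed.

Lemma Zs_inv j : inL Y (Zs j) /\ size (Zs j) = (Ssum j + size (w j) - K)%N.
Proof.
elim: j => [|j [IH1 IH2]]; first by split; [exact: ub_in| rewrite size_ub /Ssum big_ord0 add0n].
have [hg1 hg2] := gapf_spec IH1 (ub_in j.+1).
split => //=; rewrite !size_cat IH2 hg1 size_ub SsumS.
have := (hw j).2; have := (hw j.+1).2; lia.
Qed.

Lemma Zs_pre j : exists pre, Zs j = pre ++ ub j /\ size pre = Ssum j.
Proof.
case: j => [|j]; first by exists [::]; split => //; rewrite /Ssum big_ord0.
exists (Zs j ++ gapf (Zs j) (ub j.+1)); split; first by rewrite /= catA.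
have [hg1 _] := gapf_spec (Zs_inv j).1 (ub_in j.+1).
rewrite size_cat (Zs_inv j).2 hg1 SsumS; have := (hw j).2; lia.
Qed.

Lemma Zs_prefix j e : exists s, Zs (j + e) = Zs j ++ s.
Proof.
elim: e => [|e [s hs]]; first by exists [::]; rewrite addn0 cats0.
by exists (s ++ gapf (Zs (j + e)) (ub (j + e).+1) ++ ub (j + e).+1); rewrite addnS /= {1}hs -catA.
Qed.

Lemma size_Zs j : (j < size (Zs j))%N.
Proof. rewrite (Zs_inv j).2; have := Ssum_ge j; have := (hw j).2; nia. Qed.

Definition yb : seqA A := fun k => nth d (Zs k) k.

Lemma yb_nth j k : (k < size (Zs j))%N -> yb k = nth d (Zs j) k.
Proof.
move=> hk; rewrite /yb.
have [s1 hs1] := Zs_prefix k j; have [s2 hs2] := Zs_prefix j k.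
have e : Zs (k + j) = Zs (j + k) by rewrite addnC.
have := size_Zs k => hkk.
have e1 : nth d (Zs k) k = nth d (Zs k ++ s1) k by rewrite nth_cat hkk.
by rewrite e1 -hs1 e hs2 nth_cat hk.
Qed.

Lemma yb_in : Y yb.
Proof.
have [_ [cY _]] := sY; apply: cY => L.
have [y' [hy' hw']] := inL_point sY (Zs_inv L).1.
exists y'; split => // i hi.
have hiZ : (i < size (Zs L))%N by have := size_Zs L; lia.
rewrite (yb_nth hiZ).
by have := congr1 (fun s => nth d s i) hw'; rewrite nth_word // add0n.
Qed.

Lemma block_agree j t : (t < size (w j) - K)%N -> yb (Ssum j + t)%N = x (Ssum j + t)%N.
Proof.
move=> ht; have [pre [hZ hpre]] := Zs_pre j.
have hlt : (Ssum j + t < size (Zs j))%N by rewrite (Zs_inv j).2; lia.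
rewrite (yb_nth hlt) hZ nth_cat hpre ifF; last by apply/negbTE; rewrite -leqNgt; lia.
rewrite (_ : (Ssum j + t - Ssum j)%N = t); last by lia.
rewrite /ub nth_take // hcat //; lia.
Qed.

Lemma block_count j : (count (fun k => x k != yb k) (iota (Ssum j) (size (w j))) <= K)%N.
Proof.
have hK := (hw j).2.
rewrite (_ : size (w j) = (size (w j) - K) + K)%N; last by lia.
rewrite iotaD count_cat.
rewrite (eq_in_count (a2 := pred0)) ?count_pred0.
  by rewrite add0n; apply: leq_trans (count_size _ _) _; rewrite size_iota.
move=> k; rewrite mem_iota => /andP [h1 h2] /=.
rewrite (_ : k = Ssum j + (k - Ssum j))%N; last by lia.
by rewrite block_agree ?eqxx //; lia.
Qed.

Lemma mism_S j : (mismatch x yb (Ssum j) <= j * K)%N.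
Proof.
elim: j => [|j IH]; first by rewrite /Ssum big_ord0.
by rewrite SsumS mismatch_add mulSnr; have := block_count j; lia.
Qed.

Lemma locate t : exists j, (Ssum j <= t < Ssum j.+1)%N.
Proof.
elim: t => [|t [j hj]].
  exists 0%N; rewrite SsumS /Ssum big_ord0; have := (hw 0%N).2; lia.
case: (ltnP t.+1 (Ssum j.+1)) => h.
  by exists j; lia.
exists j.+1; rewrite (SsumS j.+1); have := (hw j.+1).2; lia.
Qed.

Lemma mism_bound t : (mismatch x yb t <= K * (t %/ N) + K)%N.
Proof.
have [j hj] := locate t.
have h1 := mismatch_mono x yb (ltnW (proj2 (andP hj))).
have h2 := mism_S j.+1.
have hjN : (j <= t %/ N)%N.
  rewrite leq_divRL; last by lia.
  have := Ssum_ge j; lia.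
apply: (leq_trans h1); apply: (leq_trans h2).
rewrite mulSn addnC; apply: leq_add => //.
by rewrite mulnC leq_mul2l hjN orbT.
Qed.

Lemma shadow_dbar : (dbar x yb <= INR K / INR N)%R.
Proof.
have hN : (0 < INR N)%R by apply: lt_0_INR; lia.
apply: (dbar_le_lin (K := K)).
  by apply: Rdiv_le_0_compat => //; apply: pos_INR.
move=> n hn.
have h1 : (INR (mismatch x yb n) <= INR K * INR (n %/ N) + INR K)%R.
  rewrite -mult_INR -plus_INR; apply: le_INR; apply/leP; exact: mism_bound.
have h2 : (INR (n %/ N) * INR N <= INR n)%R.
  rewrite -mult_INR; apply: le_INR; apply/leP; exact: leq_divM.
have hK : (0 <= INR K)%R by apply: pos_INR.
have h3 : (INR K * INR (n %/ N) <= INR K / INR N * INR n)%R.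
  apply: Rle_trans (_ : INR K / INR N * (INR (n %/ N) * INR N) <= _)%R.
    by right; field; lra.
  apply: Rmult_le_compat_l => //; apply: Rdiv_le_0_compat => //.
lra.
Qed.

Lemma shadow_exists : exists y, Y y /\ (dbar x y <= INR K / INR N)%R.
Proof. exists yb; split; [exact: yb_in| exact: shadow_dbar]. Qed.

End P4c.

Lemma i_to_ii (A : finType) (X : seqA A -> Prop) : shift_space X ->
  (exists Xs : nat -> (seqA A -> Prop),
      (forall n, sofic_shift (Xs n) /\ top_mixing (Xs n)) /\
      (forall n x, Xs n.+1 x -> Xs n x) /\
      (forall x, X x <-> forall n, Xs n x) /\
      is_lim_seq (fun n => dbarH X (Xs n)) (Rbar.Finite R0)) ->
  (forall x, X x <-> exists y, X y /\ shift y = x) /\ dbar_shadowing X.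
Proof.
move=> sX [Xs [hs [hdesc [hX hlim]]]]; split; first exact: i_surj hs hdesc hX.
move=> eps he.
have he2 : (0 < eps / 2)%R by lra.
have [n0 hn0] := (proj2 (is_lim_seq_spec _ _) hlim) (mkposreal _ he2).
have := hn0 n0 (le_n n0); rewrite /= Rminus_0_r => habs.
have hH : (dbarH X (Xs n0) < eps / 2)%R by apply: Rle_lt_trans habs; apply: Rle_abs.
have [[sY [nV [nE [src [tgt [lab hY]]]]]] hmix] := hs n0.
have [K hK] := sofic_spec hY hmix.
have [M hM] := INR_archimed (eps / 2) (INR K) he2.
exists (maxn M K.+1); split; first by lia.
move=> w x hw hcat.
have hXY : forall z, X z -> Xs n0 z by move=> z; rewrite hX.
have hKN : (K < maxn M K.+1)%N by lia.
have [y [hy hdy]] := shadow_exists hXY sY hK hKN hw hcat.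
have hne : exists a, X a by case: sX.
have [x' [hx' hdx']] := dbarH_close hne hy hH.
exists x'; split => //.
have hNpos : (0 < INR (maxn M K.+1))%R by apply: lt_0_INR; lia.
have hM' : (INR K < INR (maxn M K.+1) * (eps / 2))%R.
  apply: Rlt_le_trans hM _; apply: Rmult_le_compat_r; first lra.
  apply: le_INR; apply/leP; lia.
have hq : (INR K / INR (maxn M K.+1) < eps / 2)%R.
  apply: (Rmult_lt_reg_r (INR (maxn M K.+1))) => //.
  rewrite /Rdiv Rmult_assoc Rinv_l; lra.
have := dbar_tri x y x'; lra.
Qed.


Section P5.
Variable A : finType.
Implicit Types (X Y : seqA A -> Prop) (x y z : seqA A).

Lemma concat_const x m : (0 < m)%N ->
  is_concat (fun j => word x (j * m) m) x.
Proof.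
move=> hm j i; rewrite size_word => hi.
rewrite (eq_bigr (fun _ => m)); last by move=> l _; rewrite size_word.
by rewrite sum_nat_const card_ord nth_word.
Qed.

Definition altw (x0 x1 : seqA A) la lb c j : seq A :=
  if odd j then word x1 c lb else word x0 0 la.

Definition altx (x0 x1 : seqA A) la lb c : seqA A :=
  fun k => if (k %% (la + lb) < la)%N then x0 (k %% (la + lb))%N
           else x1 (c + k %% (la + lb) - la)%N.

Lemma altS x0 x1 la lb c j :
  (\sum_(l < j) size (altw x0 x1 la lb c l) = j./2 * (la + lb) + odd j * la)%N.
Proof.
elim: j => [|j IH]; first by rewrite big_ord0.
have e : (j.+1)./2 = (j./2 + odd j)%N.
  have := odd_double_half j.+1; have := odd_double_half j; rewrite /=.
  case: (odd j) => /=; lia.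
rewrite big_ord_recr IH e /altw mulnDl /=; case: (odd j) => /=; rewrite size_word; lia.
Qed.

Lemma concat_alt x0 x1 la lb c : (0 < la)%N -> (0 < lb)%N ->
  is_concat (altw x0 x1 la lb c) (altx x0 x1 la lb c).
Proof.
move=> ha hb j i hi; rewrite altS /altx.
move: hi; rewrite /altw; case: (odd j) => /= hi; rewrite size_word in hi.
- rewrite mul1n -addnA modnMDl modn_small; last by lia.
  rewrite ifF; last by apply/negbTE; rewrite -leqNgt; lia.
  by rewrite nth_word //; congr x1; lia.
- rewrite mul0n addn0 modnMDl modn_small; last by lia.
  by rewrite ifT ?nth_word.
Qed.

Lemma count_window x y s n :
  (exists t, (t <= n)%N /\ x (s + t)%N != y (s + t)%N) ->
  (1 <= count (fun j => x j != y j) (iota s n.+1))%N.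
Proof.
move=> [t [ht hne]]; rewrite -has_count; apply/hasP; exists (s + t)%N => //.
by rewrite mem_iota; lia.
Qed.

Lemma count_windows x y s n q :
  (forall r, (r < q)%N -> exists t, (t <= n)%N /\
      x (s + r * n.+1 + t)%N != y (s + r * n.+1 + t)%N) ->
  (q <= count (fun j => x j != y j) (iota s (q * n.+1)))%N.
Proof.
elim: q => [|q IH] h //.
rewrite mulSnr iotaD count_cat.
have h1 := IH (fun r hr => h r (ltnW hr)).
have h2 : (1 <= count (fun j => x j != y j) (iota (s + q * n.+1) n.+1))%N.
  by apply: count_window; apply: h.
lia.
Qed.

Lemma count_sub x y s l s' l' : (s <= s')%N -> (s' + l' <= s + l)%N ->
  (count (fun j => x j != y j) (iota s' l') <= count (fun j => x j != y j) (iota s l))%N.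
Proof.
move=> h1 h2.
rewrite (_ : l = (s' - s) + (l' + (s + l - (s' + l'))))%N; last by lia.
rewrite iotaD iotaD count_cat count_cat (_ : (s + (s' - s))%N = s') //; lia.
Qed.

Lemma preimages X y L : shift_space X ->
  (forall x, X x <-> exists y, X y /\ shift y = x) -> X y ->
  exists z, X z /\ forall j, z (L + j)%N = y j.
Proof.
move=> sX hs hy; elim: L => [|L [z [hz hzy]]]; first by exists y.
have [z' [hz' e]] := (hs z).1 hz; exists z'; split => // j.
by rewrite -hzy -e /shift; congr z'; lia.
Qed.

Lemma glue_left y1 y2 p n k : (k <= p + n)%N -> glue y1 y2 p n k = y1 k.
Proof. by move=> h; rewrite /glue ifT. Qed.

Lemma glue_right y1 y2 p n k : (p <= k)%N ->
  (forall t, (t <= n)%N -> y1 (p + t)%N = y2 t) -> glue y1 y2 p n k = y2 (k - p)%N.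
Proof.
move=> h hov; rewrite /glue; case: ifP => // hk.
by rewrite -hov; [congr y1| ]; lia.
Qed.


Lemma altx_A x0 x1 la lb c j u : (u < la)%N ->
  altx x0 x1 la lb c (j * (la + lb) + u)%N = x0 u.
Proof.
move=> h; rewrite /altx modnMDl modn_small; first by rewrite h.
by apply: (leq_trans h); apply: leq_addr.
Qed.

Lemma altx_B x0 x1 la lb c j u : (la <= u)%N -> (u < la + lb)%N ->
  altx x0 x1 la lb c (j * (la + lb) + u)%N = x1 (c + u - la)%N.
Proof.
move=> h1 h2; rewrite /altx modnMDl modn_small // ifF //.
by apply/negbTE; rewrite -leqNgt.
Qed.

Lemma ratio_ge (a b c : R) : (0 < b)%R -> (0 < c)%R -> (b <= a * c)%R -> (/ c <= a / b)%R.
Proof.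
move=> hb hc h.
have e1 : (/ c = (b / c) / b)%R by field; lra.
rewrite e1; apply: Rmult_le_compat_r; first by apply: Rlt_le; apply: Rinv_0_lt_compat.
apply: (Rmult_le_reg_r c) => //; rewrite /Rdiv Rmult_assoc Rinv_l; lra.
Qed.

Lemma density_contra (n q P : nat) x x' :
  (0 < P)%N -> (P <= 4 * n.+1 * q)%N -> (dbar x x' < / INR (4 * n.+1))%R ->
  (forall j, q <= count (fun k => x k != x' k) (iota (j * P) P))%N -> False.
Proof.
move=> hP hPq hd hc.
have hm : forall j, (j * q <= mismatch x x' (j * P))%N.
  elim => [|j IH] //; rewrite !mulSnr mismatch_add; have := hc j; lia.
have he : (0 < / INR (4 * n.+1) - dbar x x')%R by lra.
have [N0 hN0] := dbar_ev x x' he.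
have := hN0 (N0.+1 * P)%N ltac:(nia).
rewrite /ratio.
have h4 : (0 < INR (4 * n.+1))%R by apply: lt_0_INR; lia.
have hjP : (0 < INR (N0.+1 * P))%R by apply: lt_0_INR; nia.
have : (/ INR (4 * n.+1) <= INR (mismatch x x' (N0.+1 * P)) / INR (N0.+1 * P))%R.
  apply: ratio_ge => //; rewrite -mult_INR; apply: le_INR; apply/leP.
  have := hm N0.+1; nia.
lra.
Qed.


Section Core.
Variables (X : seqA A -> Prop) (sX : shift_space X)
  (hsurj : forall x, X x <-> exists y, X y /\ shift y = x)
  (hsh : dbar_shadowing X).

Lemma core_chain n : exists M0, forall a b m, inL X a -> size a = n.+1 ->
  inL X b -> size b = n.+1 -> (M0 <= m)%N ->
  exists H, markov_approx X n H /\ word H 0 n.+1 = a /\ word H m n.+1 = b.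
Proof.
have heps : (0 < / INR (4 * n.+1))%R by apply: Rinv_0_lt_compat; apply: lt_0_INR; lia.
have [N [hN0 hN]] := hsh heps.
exists (4 * n.+1 * N.+1)%N => a b m ha hsa hb hsb hm.
set P := (m + n.+1)%N.
set q := (P %/ (2 * n.+1))%N.
have hq1 : (q * (2 * n.+1) <= P)%N by apply: leq_divM.
have hq2 : (P < q.+1 * (2 * n.+1))%N by apply: ltn_ceil.
set la := (q * n.+1)%N.
set lb := (P - la)%N.
have hlaq : la = (q * n.+1)%N by [].
have hla1 : (N <= la)%N by nia.
have hla2 : (n.+1 <= la)%N by nia.
have hlab : (la <= lb)%N by nia.
have hPq : (P <= 4 * n.+1 * q)%N by nia.
have hPe : P = (la + lb)%N by lia.
have [x0 [hx0 ha0]] := inL_point sX ha.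
have [y1 [hy1 hb1]] := inL_point sX hb.
have [x1 [hx1 hx1y]] := preimages lb sX hsurj hy1.
set c := n.+1.
set x := altx x0 x1 la lb c.
have hla0 : (0 < la)%N by lia.
have hlb0 : (0 < lb)%N by lia.
have hcat := @concat_alt x0 x1 la lb c hla0 hlb0.
have hw : forall j, inL X (altw x0 x1 la lb c j) /\ (N <= size (altw x0 x1 la lb c j))%N.
  move=> j; rewrite /altw; case: (odd j); rewrite size_word; split;
    try apply: inL_word; try done; lia.
have [x' [hx' hd]] := hN _ _ hw hcat.
have hxA : forall j u, (u < la)%N -> x (j * P + u)%N = x0 u.
  by move=> j u hu; rewrite /x hPe altx_A.
have hxB : forall j u, (la <= u)%N -> (u < P)%N -> x (j * P + u)%N = x1 (c + u - la)%N.
  by move=> j u h1 h2; rewrite /x hPe altx_B //; lia.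
have [j [t1 [t2 [ht1 [ht2 [ht3 [he1 he2]]]]]]] :
  exists j t1 t2, (t1 + n < la)%N /\ (la <= t2)%N /\ (t2 + n < P)%N /\
    (forall r, (r <= n)%N -> x (j * P + t1 + r)%N = x' (j * P + t1 + r)%N) /\
    (forall r, (r <= n)%N -> x (j * P + t2 + r)%N = x' (j * P + t2 + r)%N).
  apply: NNPP => hno; apply: (density_contra (n := n) (q := q) (P := P) (x := x) (x' := x')) => //.
    lia.
  move=> j.
  case: (classic (exists t1, (t1 + n < la)%N /\
      forall r, (r <= n)%N -> x (j * P + t1 + r)%N = x' (j * P + t1 + r)%N)) => [[t1 [ht1 he1]]|hA].
  -
    have hB : forall r, (r < q)%N -> exists t, (t <= n)%N /\
        x (j * P + la + r * n.+1 + t)%N != x' (j * P + la + r * n.+1 + t)%N.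
      move=> r hr; apply: NNPP => hne; apply: hno.
      exists j, t1, (la + r * n.+1)%N; split; first by [].
      split; first by lia. split. nia.
      split; first exact: he1.
      move=> r' hr'; apply: NNPP => hneq; apply: hne; exists r'; split => //.
      rewrite ?addnA in hneq; by apply/eqP.
    have := count_windows hB.
    have := @count_sub x x' (j * P) P (j * P + la) (q * n.+1) ltac:(lia) ltac:(nia).
    lia.
  - have hA' : forall r, (r < q)%N -> exists t, (t <= n)%N /\
        x (j * P + r * n.+1 + t)%N != x' (j * P + r * n.+1 + t)%N.
      move=> r hr; apply: NNPP => hne; apply: hA.
      exists (r * n.+1)%N; split. nia.
      move=> r' hr'; apply: NNPP => hneq; apply: hne; exists r'; split => //.
      rewrite ?addnA in hneq; by apply/eqP.
    have := count_windows hA'.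
    have := @count_sub x x' (j * P) P (j * P) (q * n.+1) ltac:(lia) ltac:(nia).
    lia.
set S1 := fun u => x' (j * P + t1 + u)%N.
set S2 := fun u => x1 (c + t2 - la + u)%N.
have hov1 : forall r, (r <= n)%N -> x0 (t1 + r)%N = S1 r.
  move=> r hr; rewrite /S1 -he1 // -addnA hxA //; lia.
set G1 := glue x0 S1 t1 n.
have hov2 : forall r, (r <= n)%N -> G1 (t2 + r)%N = S2 r.
  move=> r hr; rewrite /G1 glue_right //; last by lia.
  rewrite /S1 /S2 (_ : (j * P + t1 + (t2 + r - t1))%N = (j * P + t2 + r)%N); last by lia.
  rewrite -he2 // -addnA hxB; [congr x1| |]; lia.
exists (glue G1 S2 t2 n); split; [|split].
- apply: glue_markov => //.
    apply: glue_markov => //; first exact: X_sub_markov.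
    by apply: markov_shiftn; apply: X_sub_markov.
  by apply: markov_shiftn; apply: X_sub_markov.
- rewrite -[in RHS]ha0 hsa; apply: word_ext => u hu /=.
  rewrite glue_left; last by lia.
  by rewrite /G1 glue_left; last by lia.
- rewrite -[in RHS]hb1 hsb; apply: word_ext => u hu /=.
  rewrite glue_right //; last by lia.
  rewrite /S2 -hx1y; congr x1; lia.
Qed.


Lemma markov_mixing n : top_mixing (markov_approx X n).
Proof.
move=> u w [y1 [hy1 [i1 hu]]] [y2 [hy2 [i2 hw]]].
have [M0 hM0] := core_chain n.
exists (M0 + n.+1)%N => m hm.
set p0 := (i1 + size u)%N.
have [H [hH [hHa hHb]]] := hM0 (word y1 p0 n.+1) (word y2 i2 n.+1) m (hy1 p0)
   (size_word _ _ _) (hy2 i2) (size_word _ _ _) ltac:(lia).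
have ov1 : forall t, (t <= n)%N -> y1 (p0 + t)%N = H t.
  move=> t ht; have := congr1 (fun s => nth (y1 0%N) s t) hHa.
  by rewrite /= !nth_word // add0n => ->.
set Y1 := glue y1 H p0 n.
have ov2 : forall t, (t <= n)%N -> Y1 (p0 + m + t)%N = y2 (i2 + t)%N.
  move=> t ht; rewrite /Y1 glue_right //; last by lia.
  have := congr1 (fun s => nth (y1 0%N) s t) hHb.
  rewrite /= !nth_word // => <-; congr H; lia.
set Y := glue Y1 (fun t => y2 (i2 + t)%N) (p0 + m) n.
have hY : markov_approx X n Y.
  apply: glue_markov => //; last exact: markov_shiftn.
  exact: glue_markov.
exists (word Y p0 m); split; first by rewrite size_word.
exists Y; split => //; exists i1.
rewrite !size_cat size_word !word_cat; congr (_ ++ _ ++ _).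
- rewrite -[in RHS]hu; apply: word_ext => j hj.
  rewrite /Y glue_left; last by lia.
  by rewrite /Y1 glue_left //; lia.
- rewrite -[in RHS]hw; apply: word_ext => j hj.
  rewrite /Y glue_right //; last by lia.
  congr y2; lia.
Qed.

Lemma ii_chain_mixing : chain_mixing X.
Proof. by exists 0%N => n _; apply: markov_mixing. Qed.

End Core.

Lemma ii_approach X : shift_space X -> dbar_shadowing X -> dbar_approachable X.
Proof.
move=> sX hsh; apply/is_lim_seq_spec => eps.
have he2 : (0 < eps / 2)%R by have := cond_pos eps; lra.
have [N [hN0 hN]] := hsh _ he2.
have hne : exists a, X a by case: sX.
exists N => n /leP hn.
have hmne : exists a, markov_approx X n a.
  by case: hne => a ha; exists a; apply: X_sub_markov.
have hle : (dbarH (markov_approx X n) X <= eps / 2)%R.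
  apply: dbarH_le => //.
    move=> a ha.
    have hw : forall j, inL X (word a (j * n.+1) n.+1) /\ (N <= size (word a (j * n.+1) n.+1))%N.
      by move=> j; split; [apply: ha| rewrite size_word; lia].
    have [b [hb hd]] := hN _ _ hw (@concat_const a n.+1 (ltn0Sn n)).
    by exists b; split => //; lra.
  move=> b hb; exists b; split; first exact: X_sub_markov.
  by rewrite dbar_refl; lra.
have h0 := dbarH_ge0 hmne hne.
rewrite Rminus_0_r Rabs_pos_eq //; have := cond_pos eps; lra.
Qed.

Lemma ii_to_iii X : shift_space X ->
  (forall x, X x <-> exists y, X y /\ shift y = x) /\ dbar_shadowing X ->
  chain_mixing X /\ dbar_approachable X.
Proof.
move=> sX [hs hsh]; split; first exact: ii_chain_mixing.
exact: ii_approach.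
Qed.

End P5.

Theorem mainTheorem3 (A : finType) (X : seqA A -> Prop) :
  shift_space X ->
  let cond_i :=
    exists Xs : nat -> (seqA A -> Prop),
      (forall n, sofic_shift (Xs n) /\ top_mixing (Xs n)) /\
      (forall n x, Xs n.+1 x -> Xs n x) /\
      (forall x, X x <-> forall n, Xs n x) /\
      is_lim_seq (fun n => dbarH X (Xs n)) (Rbar.Finite R0) in
  let cond_ii :=
    (forall x, X x <-> exists y, X y /\ shift y = x) /\ dbar_shadowing X in
  let cond_iii := chain_mixing X /\ dbar_approachable X in
  (cond_i <-> cond_ii) /\ (cond_ii <-> cond_iii).
Proof.
move=> sX cond_i cond_ii cond_iii.
have h1 : cond_i -> cond_ii by exact: i_to_ii sX.
have h2 : cond_ii -> cond_iii by exact: ii_to_iii sX.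
have h3 : cond_iii -> cond_i by exact: iii_to_i sX.
split; split; auto.
Qed.
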